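(* There exists a constant $C_0>0$, independent of $P$, $T$ and $\Delta$ (it may depend on $\lambda_1,\lambda_2$), such that for all $P>0$, $\Delta>0$, $T\in\mathbb{N}$, the quantizer $q_r$ satisfies $$\mathbb{E}[r_{\rm loss}]\le \log_2\Big(1+C_0\,P\,\max\{e^{-T\Delta/\lambda_1},\Delta\}\Big).$$
   Context: $H_1,H_2$ are independent exponential random variables with means $\lambda_1\ge\lambda_2>0$ (density $e^{-x/\lambda_i}/\lambda_i$, $x>0$); $P>0$ is the total power. For $a\ge b\ge0$ with $a>0$ let $A(a,b)=\frac{2b}{\sqrt{(a+b)^2+4ab^2P}+a+b}$. Full-CSI maximum minimum rate: $r_{\max}=\log_2(1+PH_1A(H_1,H_2))$ if $H_1\ge H_2$ and $r_{\max}=\log_2(1+PH_2A(H_2,H_1))$ if $H_1<H_2$. Quantizer: $q_r(x)=\lfloor x/\Delta\rfloor\Delta$ for $x\le T\Delta$, $q_r(x)=T\Delta$ for $x>T\Delta$. Let $a_i=q_r(H_i)$; if $a_1\ge a_2$ let $(s,w)=(1,2)$, otherwise $(s,w)=(2,1)$. Power fraction for the stronger receiver's message: $\alpha_q=A(a_s,a_w)$ if $a_1,a_2>0$, else $\alpha_q=0$. Adapted rates: $r_{s,q}=\log_2(1+P\alpha_qa_s)$, $r_{w,q}=\log_2\big(1+\frac{Pa_w(1-\alpha_q)}{Pa_w\alpha_q+1}\big)$. Rate loss: $r_{\rm loss}=r_{\max}-\min\{r_{1,q},r_{2,q}\}$. *)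

(* Defs.v *)
From HB Require Import structures.
From mathcomp Require Import all_boot all_order all_algebra.
From mathcomp Require Import all_classical all_reals all_analysis.
Set Implicit Arguments. Unset Strict Implicit. Unset Printing Implicit Defensive.
Import Order.TTheory GRing.Theory Num.Theory.
Local Open Scope ring_scope.

Section Defs.
Variable R : realType.

Definition log2 (x : R) : R := ln x / ln 2.

Definition Afrac (P a b : R) : R :=
  2 * b / (Num.sqrt ((a + b) ^+ 2 + 4 * a * b ^+ 2 * P) + a + b).

Definition rmax (P h1 h2 : R) : R :=
  if h2 <= h1 then log2 (1 + P * h1 * Afrac P h1 h2)
  else log2 (1 + P * h2 * Afrac P h2 h1).

Definition qr (Delta : R) (T : nat) (x : R) : R :=
  if x <= T%:R * Delta then (Num.floor (x / Delta))%:~R * Delta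
  else T%:R * Delta.

Definition rmin_q (P Delta : R) (T : nat) (h1 h2 : R) : R :=
  let a1 := qr Delta T h1 in
  let a2 := qr Delta T h2 in
  let a_s := if a2 <= a1 then a1 else a2 in
  let a_w := if a2 <= a1 then a2 else a1 in
  let alpha := if (0 < a1) && (0 < a2) then Afrac P a_s a_w else 0 in
  let r_s := log2 (1 + P * alpha * a_s) in
  let r_w := log2 (1 + P * a_w * (1 - alpha) / (P * a_w * alpha + 1)) in
  Num.min r_s r_w.

Definition rloss (P Delta : R) (T : nat) (h1 h2 : R) : R :=
  rmax P h1 h2 - rmin_q P Delta T h1 h2.

Definition exp_density (lam x : R) : R := expR (- x / lam) / lam.

(* E[rloss(H1,H2)] for independent exponentials H1, H2 with means lam1, lam2:
   Lebesgue integral w.r.t. the joint law (density on (0,oo)^2) *)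
Definition expected_rloss (lam1 lam2 P Delta : R) (T : nat) : \bar R :=
  (\int[(@lebesgue_measure R) \x (@lebesgue_measure R)]_(z in
      [set z : R * R | (0 < z.1)%R /\ (0 < z.2)%R])
    (rloss P Delta T z.1 z.2 * exp_density lam1 z.1 * exp_density lam2 z.2)%:E)%E.

End Defs.

(* Main.v *)
Require Import Defs.
From HB Require Import structures.
From mathcomp Require Import all_boot all_order all_algebra.
From mathcomp Require Import all_classical all_reals all_analysis.
From mathcomp Require Import ring lra measurable_realfun.
Import Order.TTheory GRing.Theory Num.Theory.
Local Open Scope ring_scope.
Import numFieldTopology.Exports numFieldNormedType.Exports.
Local Open Scope classical_set_scope.
Section Alg.
Variable R : realType.
Notation mu := (@lebesgue_measure R).
Lemma Afrac_ge0 (P a b : R) : 0 < P -> 0 < a -> 0 <= b -> 0 <= Afrac P a b.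
Proof.
move=> P0 a0 b0; rewrite /Afrac; apply: divr_ge0; first lra.
by have := sqrtr_ge0 ((a + b) ^+ 2 + 4 * a * b ^+ 2 * P); lra.
Qed.

Lemma Afrac_quad (P a b : R) : 0 < P -> 0 < a -> 0 <= b ->
  P * a * b * (Afrac P a b) ^+ 2 + (a + b) * Afrac P a b - b = 0.
Proof.
move=> P0 a0 b0.
set Q := (a + b) ^+ 2 + 4 * a * b ^+ 2 * P.
have Q0 : 0 <= Q by rewrite /Q; apply: addr_ge0; [exact: sqr_ge0|];
  apply: mulr_ge0; [apply: mulr_ge0; [lra|exact: sqr_ge0]|lra].
set D := Num.sqrt Q.
have D0 : 0 <= D by exact: sqrtr_ge0.
have DQ : D ^+ 2 = Q by rewrite /D sqr_sqrtr.
set S := D + a + b.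
have S0 : S != 0 by rewrite /S; apply/negP => /eqP; lra.
have -> : Afrac P a b = 2 * b / S by [].
set A := 2 * b / S.
have e2 : A * S = 2 * b by rewrite /A divfK.
have e3 : (D - a - b) * S = 4 * a * b ^+ 2 * P.
  rewrite /S; have -> : (D - a - b) * (D + a + b) = D ^+ 2 - (a + b) ^+ 2 by ring.
  by rewrite DQ /Q; ring.
have e1 : 2 * P * a * b * A = D - a - b.
  apply: (mulIf S0); rewrite e3.
  have -> : 2 * P * a * b * A * S = 2 * P * a * b * (A * S) by ring.
  rewrite e2; ring.
have : 2 * (P * a * b * A ^+ 2 + (a + b) * A - b) =
  A * (2 * P * a * b * A - (D - a - b)) + (A * S - 2 * b).
  by rewrite /S; ring.
rewrite e1 e2 !subrr mulr0 addr0 => /eqP; rewrite mulf_eq0 => /orP[|/eqP//].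
by rewrite pnatr_eq0.
Qed.

Arguments Afrac_quad {P a b}.
Arguments Afrac_ge0 {P a b}.

Lemma key_t (P hs hw qs qw L t s : R) : 0 < P -> 0 < hw -> 0 < hs ->
  0 < qw -> 0 < qs -> hw <= qw + L -> hs <= qs + L -> 0 <= L -> 0 <= s ->
  s * hs + s * hw + s ^+ 2 * hw = P * hs * hw -> 0 <= t ->
  t * qs + t * qw + t ^+ 2 * qw = P * qs * qw ->
  s <= t + P * L * (1 + t).
Proof.
move=> P0 hw0 hs0 qw0 qs0 hwL hsL L0 s0 Gs t0 Gt.
set u := t + P * L * (1 + t).
have u0 : t <= u by rewrite /u; have := mulr_ge0 (mulr_ge0 (ltW P0) L0) (addr_ge0 ler01 t0); lra.
have Pqw : t <= P * qw.
  rewrite -(ler_pM2r qs0); have : 0 <= t ^+ 2 * qw by apply: mulr_ge0; [exact: sqr_ge0|exact: ltW].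
  have : 0 <= t * qw by apply: mulr_ge0 => //; exact: ltW.
  rewrite -[P * qw * qs]mulrA [qw * qs]mulrC mulrA. lra.
have Pqs : t * (1 + t) <= P * qs.
  rewrite -(ler_pM2r qw0); have : 0 <= t * qs by apply: mulr_ge0 => //; exact: ltW.
  rewrite -[P * qs * qw]mulrA mulrA -Gt => ?.
  have -> : t * (1 + t) * qw = t * qw + t ^+ 2 * qw by ring. lra.
have X : t * hw <= u * qw.
  have h1 : t * hw <= t * (qw + L) by exact: ler_wpM2l.
  have h2 : t * L <= P * qw * (1 + t) * L.
    apply: ler_wpM2r => //; have : P * qw <= P * qw * (1 + t).
      have := mulr_ge0 (mulr_ge0 (ltW P0) (ltW qw0)) t0.
      have -> : P * qw * (1 + t) = P * qw + P * qw * t by ring. lra.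
    lra.
  rewrite /u; have -> : (t + P * L * (1 + t)) * qw = t * qw + P * qw * (1 + t) * L by ring.
  rewrite (_ : t * (qw + L) = t * qw + t * L) in h1; last by ring. lra.
have Y : t * (1 + t) * hs <= u * (1 + u) * qs.
  have h1 : t * (1 + t) * hs <= t * (1 + t) * (qs + L).
    by apply: ler_wpM2l => //; apply: mulr_ge0 => //; lra.
  have h2 : t * (1 + t) * L <= P * qs * L by exact: ler_wpM2r.
  have h3 : t * (1 + t) + P * L <= u * (1 + u).
    rewrite /u; set w := P * L.
    have w0 : 0 <= w by apply: mulr_ge0 => //; exact: ltW.
    have : 0 <= w * t * (3 + 2 * t) + w * w * (1 + t) ^+ 2.
      have p1 : 0 <= 1 + t by lra.
      have p3 : 0 <= 3 + 2 * t by lra.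
      have p2 : 0 <= (1 + t) ^+ 2 by exact: sqr_ge0.
      apply: addr_ge0; do 2 apply: mulr_ge0 => //.
    have -> : (t + w * (1 + t)) * (1 + (t + w * (1 + t))) =
      t * (1 + t) + w + (w * t * (3 + 2 * t) + w * w * (1 + t) ^+ 2) by ring.
    lra.
  have h4 : (t * (1 + t) + P * L) * qs <= u * (1 + u) * qs by apply: ler_wpM2r => //; exact: ltW.
  rewrite (_ : t * (1 + t) * (qs + L) = t * (1 + t) * qs + t * (1 + t) * L) in h1; last by ring.
  rewrite (_ : (t * (1 + t) + P * L) * qs = t * (1 + t) * qs + P * qs * L) in h4; last by ring.
  lra.
have Gu : P * hs * hw <= u * hs + u * hw + u ^+ 2 * hw.
  have qq : 0 < qs * qw by exact: mulr_gt0.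
  rewrite -(ler_pM2l qq).
  have -> : qs * qw * (P * hs * hw) = qs * hs * (t * hw) + qw * hw * (t * (1 + t) * hs).
    have -> : qs * qw * (P * hs * hw) = (P * qs * qw) * hs * hw by ring.
    rewrite -Gt; ring.
  have -> : qs * qw * (u * hs + u * hw + u ^+ 2 * hw) =
    qs * hs * (u * qw) + qw * hw * (u * (1 + u) * qs) by ring.
  apply: lerD; apply: ler_wpM2l => //; apply: mulr_ge0; exact: ltW.
rewrite leNgt; apply/negP => su.
have : u * hs + u * hw + u ^+ 2 * hw < s * hs + s * hw + s ^+ 2 * hw.
  have a1 : u * hs < s * hs by rewrite ltr_pM2r.
  have a2 : u * hw < s * hw by rewrite ltr_pM2r.
  have a3 : u ^+ 2 * hw <= s ^+ 2 * hw.
    apply: ler_wpM2r; first exact: ltW.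
    by rewrite ler_sqr ?nnegrE; [exact: ltW| |]; lra.
  lra.
lra.
Qed.

Arguments key_t {P hs hw qs qw L t s}.

Lemma key_0 (P hs hw L s : R) : 0 < P -> 0 < hw -> 0 < hs -> hw <= L ->
  0 <= s -> s * hs + s * hw + s ^+ 2 * hw = P * hs * hw -> s <= P * L.
Proof.
move=> P0 hw0 hs0 hwL s0 Gs; rewrite leNgt; apply/negP => sL.
have a1 : P * L * hs < s * hs by rewrite ltr_pM2r.
have a2 : P * hw * hs <= P * L * hs.
  by apply: ler_wpM2r; [exact: ltW|]; apply: ler_wpM2l => //; exact: ltW.
have a3 : 0 <= s * hw + s ^+ 2 * hw.
  by apply: addr_ge0; apply: mulr_ge0 => //; [exact: ltW|exact: sqr_ge0|exact: ltW].
have : P * hw * hs = P * hs * hw by ring.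
lra.
Qed.

Arguments key_0 {P hs hw L s}.

Lemma log_step (s t y : R) : 0 <= s -> 0 <= t -> 0 <= y -> s <= t + y * (1 + t) ->
  log2 (1 + s) - log2 (1 + t) <= log2 (1 + y).
Proof.
move=> s0 t0 y0 st.
have l2 : 0 < ln (2 : R) by apply: ln_gt0; lra.
rewrite /log2 -mulrBl ler_pM2r ?invr_gt0 //.
have pt : (1 + t) \in Num.pos by rewrite posrE; lra.
have py : (1 + y) \in Num.pos by rewrite posrE; lra.
rewrite lerBlDl -lnM //.
rewrite ler_ln ?posrE; [|lra|by apply: mulr_gt0; lra].
have -> : (1 + t) * (1 + y) = 1 + (t + y * (1 + t)) by ring.
lra.
Qed.

Definition rminq (P a1 a2 : R) : R :=
  let a_s := if a2 <= a1 then a1 else a2 in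
  let a_w := if a2 <= a1 then a2 else a1 in
  let alpha := if (0 < a1) && (0 < a2) then Afrac P a_s a_w else 0 in
  let r_s := log2 (1 + P * alpha * a_s) in
  let r_w := log2 (1 + P * a_w * (1 - alpha) / (P * a_w * alpha + 1)) in
  Num.min r_s r_w.

Lemma rmin_qE P Delta T h1 h2 :
  rmin_q P Delta T h1 h2 = rminq P (qr Delta T h1) (qr Delta T h2).
Proof. by []. Qed.

Lemma rmax_char (P h1 h2 : R) : 0 < P -> 0 < h1 -> 0 < h2 ->
  exists s hs hw, [/\ 0 <= s, rmax P h1 h2 = log2 (1 + s),
    s * hs + s * hw + s ^+ 2 * hw = P * hs * hw, hw <= hs &
    (hs = h1 /\ hw = h2) \/ (hs = h2 /\ hw = h1)].
Proof.
move=> P0 h10 h20; rewrite /rmax; case: ifP => h21.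
- exists (P * h1 * Afrac P h1 h2), h1, h2; split => //; last by left.
  + by apply: mulr_ge0; [apply: mulr_ge0; exact: ltW|apply: Afrac_ge0 => //; exact: ltW].
  + have E := Afrac_quad P0 h10 (ltW h20).
    apply/eqP; rewrite -subr_eq0; apply/eqP.
    set A := Afrac P h1 h2 in E *.
    have -> : P * h1 * A * h1 + P * h1 * A * h2 + (P * h1 * A) ^+ 2 * h2 - P * h1 * h2 =
      P * h1 * (P * h1 * h2 * A ^+ 2 + (h1 + h2) * A - h2) by ring.
    by rewrite E mulr0.
- have h12 : h1 < h2 by rewrite ltNge h21.
  exists (P * h2 * Afrac P h2 h1), h2, h1; split => //; last (by right); last exact: ltW.
  + by apply: mulr_ge0; [apply: mulr_ge0; exact: ltW|apply: Afrac_ge0 => //; exact: ltW].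
  + have E := Afrac_quad P0 h20 (ltW h10).
    apply/eqP; rewrite -subr_eq0; apply/eqP.
    set A := Afrac P h2 h1 in E *.
    have -> : P * h2 * A * h2 + P * h2 * A * h1 + (P * h2 * A) ^+ 2 * h1 - P * h2 * h1 =
      P * h2 * (P * h2 * h1 * A ^+ 2 + (h2 + h1) * A - h1) by ring.
    by rewrite E mulr0.
Qed.

Lemma rate_eq (P a b : R) : 0 < P -> 0 < a -> 0 < b ->
  1 + P * b * (1 - Afrac P a b) / (P * b * Afrac P a b + 1) = 1 + P * Afrac P a b * a.
Proof.
move=> P0 a0 b0; have E := Afrac_quad P0 a0 (ltW b0).
have A0 := Afrac_ge0 P0 a0 (ltW b0).
set A := Afrac P a b in E A0 *.
have D0 : P * b * A + 1 != 0.
  by apply/negP => /eqP; have := mulr_ge0 (mulr_ge0 (ltW P0) (ltW b0)) A0; lra.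
congr (1 + _); apply: (mulIf D0); rewrite divfK //.
apply/eqP; rewrite -subr_eq0; apply/eqP.
have -> : P * b * (1 - A) - P * A * a * (P * b * A + 1) =
  - P * (P * a * b * A ^+ 2 + (a + b) * A - b) by ring.
by rewrite E mulr0.
Qed.

Lemma rminq_char (P a1 a2 : R) : 0 < P -> 0 <= a1 -> 0 <= a2 ->
  exists t, [/\ 0 <= t, rminq P a1 a2 = log2 (1 + t) &
    (t = 0 /\ (a1 = 0 \/ a2 = 0)) \/
    (exists qs qw, [/\ 0 < qs, 0 < qw, qw <= qs,
       t * qs + t * qw + t ^+ 2 * qw = P * qs * qw &
       (qs = a1 /\ qw = a2) \/ (qs = a2 /\ qw = a1)])].
Proof.
move=> P0 a10 a20; rewrite /rminq /=.
case: (@leP _ _ a2 a1) => a21; case: (boolP ((0 < a1) && (0 < a2))) => apos.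
- move/andP: apos => [a1p a2p].
  have E := Afrac_quad P0 a1p (ltW a2p).
  have A0 := Afrac_ge0 P0 a1p (ltW a2p).
  exists (P * Afrac P a1 a2 * a1); split.
  + by apply: mulr_ge0; [apply: mulr_ge0 => //; exact: ltW|exact: ltW].
  + by rewrite rate_eq // minxx.
  + right; exists a1, a2; split => //; last by left.
    set A := Afrac P a1 a2 in E A0 *.
    apply/eqP; rewrite -subr_eq0; apply/eqP.
    have -> : P * A * a1 * a1 + P * A * a1 * a2 + (P * A * a1) ^+ 2 * a2 - P * a1 * a2 =
      P * a1 * (P * a1 * a2 * A ^+ 2 + (a1 + a2) * A - a2) by ring.
    by rewrite E mulr0.
- have a2z : a2 = 0.
    move: apos; rewrite negb_and -!leNgt => /orP[]; lra.
  exists 0; split => //; last by left; split => //; right.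
  by rewrite a2z !(mulr0, mul0r, subr0, addr0, div1r, invr1, minxx).
- move/andP: apos => [a1p a2p].
  have a12 : a1 < a2 by [].
  have E := Afrac_quad P0 a2p (ltW a1p).
  have A0 := Afrac_ge0 P0 a2p (ltW a1p).
  exists (P * Afrac P a2 a1 * a2); split.
  + by apply: mulr_ge0; [apply: mulr_ge0 => //; exact: ltW|exact: ltW].
  + by rewrite rate_eq // minxx.
  + right; exists a2, a1; split => //; [exact: ltW| |by right].
    set A := Afrac P a2 a1 in E A0 *.
    apply/eqP; rewrite -subr_eq0; apply/eqP.
    have -> : P * A * a2 * a2 + P * A * a2 * a1 + (P * A * a2) ^+ 2 * a1 - P * a2 * a1 =
      P * a2 * (P * a2 * a1 * A ^+ 2 + (a2 + a1) * A - a1) by ring.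
    by rewrite E mulr0.
- have a1z : a1 = 0.
    have a12 : a1 < a2 by [].
    move: apos; rewrite negb_and -!leNgt => /orP[]; lra.
  exists 0; split => //; last by left; split => //; left.
  by rewrite a1z !(mulr0, mul0r, subr0, addr0, div1r, invr1, minxx).
Qed.

Lemma rate_bound (P h1 h2 a1 a2 : R) : 0 < P -> 0 < h1 -> 0 < h2 ->
  0 <= a1 -> a1 <= h1 -> 0 <= a2 -> a2 <= h2 ->
  rmax P h1 h2 - rminq P a1 a2 <= log2 (1 + P * ((h1 - a1) + (h2 - a2))).
Proof.
move=> P0 h10 h20 a10 a1h a20 a2h.
have [s [hs [hw [s0 -> Gs hwhs Hh]]]] := @rmax_char P h1 h2 P0 h10 h20.
have [t [t0 -> Ht]] := @rminq_char P a1 a2 P0 a10 a20.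
set L := (h1 - a1) + (h2 - a2).
have L0 : 0 <= L by rewrite /L; lra.
have hw0 : 0 < hw by case: Hh => -[_ ->].
have hs0 : 0 < hs by case: Hh => -[-> _].
apply: log_step => //; first by apply: mulr_ge0 => //; exact: ltW.
case: Ht => [[-> Ha]|[qs [qw [qs0 qw0 qwqs Gt Hq]]]].
- rewrite add0r addr0 mulr1; apply: (key_0 P0 hw0 hs0) => //.
  by rewrite /L; case: Hh => -[? ?]; case: Ha => ?; subst; lra.
- apply: (key_t P0 hw0 hs0 qw0 qs0) => //;
  by rewrite /L; case: Hh => -[? ?]; case: Hq => -[? ?]; subst; lra.
Qed.


Lemma qr_props (Delta : R) (T : nat) (h : R) : 0 < Delta -> 0 < h ->
  [/\ 0 <= qr Delta T h, qr Delta T h <= h &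
      h - qr Delta T h <= Delta + Num.max (h - T%:R * Delta) 0].
Proof.
move=> D0 h0; rewrite /qr.
have TD : 0 <= T%:R * Delta by apply: mulr_ge0 => //; exact: ltW.
have m0 : 0 <= Num.max (h - T%:R * Delta) 0 by rewrite le_max lexx orbT.
have m1 : h - T%:R * Delta <= Num.max (h - T%:R * Delta) 0 by rewrite le_max lexx.
case: ifP => hT.
- set x := h / Delta.
  have fl := floor_le x.
  have fg := floorD1_gt x.
  have f0 : 0 <= (Num.floor x)%:~R :> R.
    rewrite ler0z floor_ge_int /x; apply: divr_ge0; exact: ltW.
  rewrite intrD /= in fg.
  have hx : h = x * Delta by rewrite /x divfK // gt_eqF.
  split.
  + by apply: mulr_ge0 => //; exact: ltW.
  + by rewrite [X in _ <= X]hx; apply: ler_wpM2r => //; exact: ltW.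
  + have : x * Delta < ((Num.floor x)%:~R + 1) * Delta by rewrite ltr_pM2r.
    rewrite -hx mulrDl mul1r; lra.
- have Th : T%:R * Delta < h by rewrite ltNge hT.
  split => //; [exact: ltW|lra].
Qed.


Lemma int_exp_tail (r a : R) : 0 < r -> 0 <= a ->
  (\int[mu]_(x in `[a, +oo[) (exponential_pdf r x)%:E = (expR (- r * a))%:E)%E.
Proof.
move=> r0 a0.
have cexpNM : continuous (fun z : R^o => expR (- r * z)).
  move=> z; apply: continuous_comp; last exact: continuous_expR.
  by apply: continuousM => //; apply: (@continuousN _ R^o); exact: cst_continuous.
rewrite (@ge0_continuous_FTC2y _ _ (fun x => - (expR (- r * x))) _ 0)//.
- by rewrite EFinN oppeK add0e.
- by move=> x _; apply: exponential_pdf_ge0; exact: ltW.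
- apply: continuous_subspaceW; last exact: within_continuous_exponential_pdf.
  by move=> x /=; rewrite !in_itv /= !andbT => /(le_trans a0).
- rewrite -oppr0; apply: cvgN.
  rewrite (_ : (fun x => expR (- r * x)) =
               (fun z => expR (- z)) \o (fun z => r * z)); last first.
    by apply: eq_fun => x; rewrite mulNr.
  apply: (@cvg_comp _ _ _ _ _ _ (pinfty_nbhs R)); last exact: cvgr_expR.
  exact: gt0_cvgMry.
- by apply: cvgN; apply/cvg_at_right_filter; exact: cexpNM.
- move=> x; rewrite in_itv /= andbT => ax.
  by apply: derive1_exponential_pdf; rewrite in_itv /= andbT; exact: le_lt_trans ax.
Qed.

Lemma prod_int (f g : R -> R) : measurable_fun setT f -> measurable_fun setT g ->
  (forall x, 0 <= f x) -> (forall x, 0 <= g x) ->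
  (\int[mu \x mu]_z (f z.1 * g z.2)%:E =
   \int[mu]_x (f x)%:E * \int[mu]_y (g y)%:E)%E.
Proof.
move=> mf mg f0 g0.
have mfg : measurable_fun [set: R * R] (EFin \o (fun z : R * R => f z.1 * g z.2)).
  apply/measurable_EFinP; apply: measurable_funM.
  - exact: (measurableT_comp mf measurable_fst).
  - exact: (measurableT_comp mg measurable_snd).
rewrite fubini_tonelli1 //; last by move=> z; rewrite lee_fin mulr_ge0.
rewrite /fubini_F /=.
under eq_integral => x _.
  rewrite (_ : (fun y => (f x * g y)%:E) = (fun y => (f x)%:E * (g y)%:E)%E);
    last by apply/funext => y; rewrite EFinM.
  rewrite ge0_integralZl_EFin //; last 2 first.
    by move=> y _; rewrite lee_fin.
    exact/measurable_EFinP.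
  over.
rewrite ge0_integralZr //.
- exact/measurable_EFinP.
- by move=> x _; rewrite lee_fin.
- by apply: integral_ge0 => y _; rewrite lee_fin.
Qed.


Lemma le_integral_nm d (T : measurableType d) (m : {measure set T -> \bar R})
    (D : set T) (f g : T -> \bar R) :
  (forall x, D x -> 0 <= g x)%E -> (forall x, D x -> f x <= g x)%E ->
  (\int[m]_(x in D) f x <= \int[m]_(x in D) g x)%E.
Proof.
move=> g0 fg.
rewrite (integralE _ D f).
have n0 : (0 <= \int[m]_(x in D) f^\- x)%E.
  by apply: integral_ge0 => x _; exact: funeneg_ge0.
apply: le_trans (_ : (\int[m]_(x in D) f^\+ x - 0 <= _)%E).
  by apply: leeB => //.
rewrite sube0.
rewrite [X in (X <= _)%E]ge0_integralE; last by move=> x _; exact: funepos_ge0.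
rewrite ge0_integralE //.
apply: ereal_sup_le => _ [h hle <-]; exists h => //= x.
apply: le_trans (hle x) _.
rewrite !patchE; case: ifPn => // /set_mem Dx.
by rewrite funeposE ge_max fg // g0.
Qed.


Lemma tangent_ln (a y : R) : 0 <= a -> 0 <= y ->
  ln (1 + y) <= ln (1 + a) + (y - a) / (1 + a).
Proof.
move=> a0 y0.
have pa : (1 + a) \in Num.pos by rewrite posrE; lra.
have py : (1 + y) \in Num.pos by rewrite posrE; lra.
rewrite -lerBlDl -ln_div //.
have -> : (1 + y) / (1 + a) = 1 + (y - a) / (1 + a).
  by field; lra.
apply: le_ln1Dx.
have -> : (y - a) / (1 + a) = (1 + y) / (1 + a) - 1 by field; lra.
have : 0 < (1 + y) / (1 + a) by apply: divr_gt0; lra.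
lra.
Qed.

Definition phi (lam : R) := exponential_pdf (lam^-1).
Definition psi (lam c : R) := (exponential_pdf ((2 * lam)^-1)) \_ `[c, +oo[%classic.

Lemma phiE (lam x : R) : 0 < lam -> 0 < x -> phi lam x = exp_density lam x.
Proof.
move=> l0 x0; rewrite /phi exponential_pdfE ?ltW // /exp_density.
by rewrite mulrC; congr (expR _ * _); ring.
Qed.

Lemma phi_ge0 (lam x : R) : 0 < lam -> 0 <= phi lam x.
Proof. by move=> l0; apply: exponential_pdf_ge0; rewrite invr_ge0 ltW. Qed.

Lemma psi_ge0 (lam c x : R) : 0 < lam -> 0 <= psi lam c x.
Proof.
move=> l0; rewrite /psi patchE; case: ifPn => // _.
by apply: exponential_pdf_ge0; rewrite invr_ge0 mulr_ge0 // ltW.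
Qed.

Lemma tail_pt (lam c x : R) : 0 < lam -> 0 <= c -> 0 < x ->
  Num.max (x - c) 0 * exp_density lam x <=
  4 * lam * expR (- (2 * lam)^-1 * c) * psi lam c x.
Proof.
move=> l0 c0 x0.
have K0 : 0 <= 4 * lam * expR (- (2 * lam)^-1 * c) by
  apply: mulr_ge0; [apply: mulr_ge0; lra|exact: expR_ge0].
have [xc|cx] := ltP x c.
- have -> : Num.max (x - c) 0 = 0 by apply/max_idPr; lra.
  by rewrite mul0r; apply: mulr_ge0 => //; exact: psi_ge0.
- have -> : Num.max (x - c) 0 = x - c by apply/max_idPl; lra.
  rewrite /psi patchE ifT; last by rewrite inE /= in_itv /= cx.
  rewrite exponential_pdfE; last exact: le_trans cx.
  rewrite /exp_density.
  set y := (x - c) / lam.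
  have y0 : 0 <= y by rewrite /y; apply: divr_ge0; lra.
  have ey : y <= 2 * expR (y / 2).
    by have := expR_ge1Dx (y / 2); lra.
  have -> : - x / lam = - (2 * lam)^-1 * c + (- (2 * lam)^-1 * x + - (y / 2)).
    by rewrite /y; field; lra.
  rewrite !expRD.
  set E1 := expR (- (2 * lam)^-1 * c); set E2 := expR (- (2 * lam)^-1 * x).
  have E10 : 0 <= E1 by exact: expR_ge0.
  have E20 : 0 <= E2 by exact: expR_ge0.
  have E3 : expR (- (y / 2)) * expR (y / 2) = 1.
    by rewrite mulrC expRxMexpNx_1.
  have E30 : 0 < expR (y / 2) by exact: expR_gt0.
  have : y * expR (- (y / 2)) <= 2.
    have := ler_wpM2r (expR_ge0 (- (y / 2))) ey.
    by rewrite -[X in _ <= X -> _]mulrA -expRD addrN expR0 mulr1.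
  have -> : (x - c) * (E1 * (E2 * expR (- (y / 2))) / lam) =
    (y * expR (- (y / 2))) * (E1 * E2) by rewrite /y; field; lra.
  have -> : 4 * lam * E1 * ((2 * lam)^-1 * E2) = 2 * (E1 * E2) by field; lra.
  move=> H; apply: ler_wpM2r => //; exact: mulr_ge0.
Qed.

Lemma phi_meas (lam : R) : measurable_fun setT (phi lam).
Proof. exact: measurable_exponential_pdf. Qed.

Lemma psi_meas (lam c : R) : measurable_fun setT (psi lam c).
Proof.
apply/(measurable_restrictT _ _).1; first exact: measurable_itv.
apply: measurable_funTS; exact: measurable_exponential_pdf.
Qed.

Lemma phi_int (lam : R) : 0 < lam -> (\int[mu]_x (phi lam x)%:E = 1)%E.
Proof. by move=> l0; apply: integral_exponential_pdf; rewrite invr_gt0. Qed.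

Lemma psi_int (lam c : R) : 0 < lam -> 0 <= c ->
  (\int[mu]_x (psi lam c x)%:E = (expR (- (2 * lam)^-1 * c))%:E)%E.
Proof.
move=> l0 c0.
rewrite (_ : (fun x => (psi lam c x)%:E) = (EFin \o exponential_pdf ((2 * lam)^-1)) \_ `[c, +oo[%classic); last first.
  by rewrite restrict_EFin.
rewrite -integral_mkcond; apply: int_exp_tail => //.
by rewrite invr_gt0 mulr_gt0.
Qed.

Lemma meas_prod (k : R) (f g : R -> R) : measurable_fun setT f -> measurable_fun setT g ->
  measurable_fun [set: R * R] (fun z : R * R => (k * f z.1 * g z.2)%:E).
Proof.
move=> mf mg; apply/measurable_EFinP; apply: measurable_funM.
- apply: measurable_funM; first exact: measurable_cst.
  exact: (measurableT_comp mf measurable_fst).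
- exact: (measurableT_comp mg measurable_snd).
Qed.

Lemma prod_int_k (k If Ig : R) (f g : R -> R) :
  measurable_fun setT f -> measurable_fun setT g ->
  (forall x, 0 <= f x) -> (forall x, 0 <= g x) -> 0 <= k ->
  (\int[mu]_x (f x)%:E = If%:E)%E -> (\int[mu]_x (g x)%:E = Ig%:E)%E ->
  (\int[mu \x mu]_z (k * f z.1 * g z.2)%:E = (k * If * Ig)%:E)%E.
Proof.
move=> mf mg f0 g0 k0 Hf Hg.
have mkf : measurable_fun setT (fun x => k * f x).
  by apply: measurable_funM => //; exact: measurable_cst.
have H := @prod_int (fun x => k * f x) g mkf mg (fun x => mulr_ge0 k0 (f0 x)) g0.
simpl in H; rewrite H.
rewrite Hg.
under eq_integral do rewrite EFinM.
rewrite ge0_integralZl_EFin //; last 2 first.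
  by move=> x _; rewrite lee_fin.
  exact/measurable_EFinP.
by rewrite Hf -!EFinM.
Qed.


Lemma log2_le (u v : R) : 0 < u -> u <= v -> log2 u <= log2 v.
Proof.
move=> u0 uv; have l2 : 0 < ln (2 : R) by apply: ln_gt0; lra.
rewrite /log2 ler_pM2r ?invr_gt0 // ler_ln ?posrE //; lra.
Qed.

Lemma pointwise (lam1 lam2 P Delta a : R) (T : nat) (x y c' K0' K1' : R) :
  0 < lam1 -> 0 < lam2 -> 0 < P -> 0 < Delta -> 0 <= a -> 0 < x -> 0 < y ->
  c' = T%:R * Delta -> K0' = (ln (1 + a) - a / (1 + a)) / ln 2 ->
  K1' = P / ((1 + a) * ln 2) ->
  rloss P Delta T x y * exp_density lam1 x * exp_density lam2 y <=
  (K0' + 2 * Delta * K1') * phi lam1 x * phi lam2 y +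
  (K1' * (4 * lam1 * expR (- (2 * lam1)^-1 * c'))) * psi lam1 c' x * phi lam2 y +
  (K1' * (4 * lam2 * expR (- (2 * lam2)^-1 * c'))) * phi lam1 x * psi lam2 c' y.
Proof.
move=> l10 l20 P0 D0 a0 x0 y0 -> -> ->.
set c := T%:R * Delta; set K0 := (ln (1 + a) - a / (1 + a)) / ln 2.
set K1 := P / ((1 + a) * ln 2).
have c0 : 0 <= c by rewrite /c; apply: mulr_ge0 => //; exact: ltW.
have l2 : 0 < ln (2 : R) by apply: ln_gt0; lra.
have K10 : 0 <= K1 by rewrite /K1; apply: divr_ge0; [exact: ltW|apply: mulr_ge0; lra].
have [qx0 qxh qxL] := @qr_props Delta T x D0 x0.
have [qy0 qyh qyL] := @qr_props Delta T y D0 y0.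
have rb := @rate_bound P x y _ _ P0 x0 y0 qx0 qxh qy0 qyh.
rewrite -rmin_qE -/(rloss P Delta T x y) in rb.
set px := Num.max (x - c) 0 in qxL *.
set py := Num.max (y - c) 0 in qyL *.
have px0 : 0 <= px by rewrite /px le_max lexx orbT.
have py0 : 0 <= py by rewrite /py le_max lexx orbT.
set Lam := 2 * Delta + px + py.
have Lam0 : 0 <= Lam by rewrite /Lam; lra.
have B : rloss P Delta T x y <= K0 + K1 * Lam.
  apply: le_trans rb _.
  apply: le_trans (@log2_le _ (1 + P * Lam) _ _) _.
  - have : 0 <= P * (x - qr Delta T x + (y - qr Delta T y)).
      by apply: mulr_ge0; lra.
    lra.
  - rewrite lerD2l; apply: ler_wpM2l; [exact: ltW|rewrite /Lam; lra].
  have PL0 : 0 <= P * Lam by apply: mulr_ge0 => //; exact: ltW.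
  have := @tangent_ln a (P * Lam) a0 PL0.
  rewrite /log2 /K0 /K1 => H.
  have -> : (ln (1 + a) - a / (1 + a)) / ln 2 + P / ((1 + a) * ln 2) * Lam =
    (ln (1 + a) + (P * Lam - a) / (1 + a)) / ln 2 by field; apply/andP; split; lra.
  by rewrite ler_pM2r ?invr_gt0.
have d1 := @phiE lam1 x l10 x0; have d2 := @phiE lam2 y l20 y0.
have d10 : 0 <= exp_density lam1 x by rewrite -d1; exact: (@phi_ge0 lam1 x l10).
have d20 : 0 <= exp_density lam2 y by rewrite -d2; exact: (@phi_ge0 lam2 y l20).
have tx := @tail_pt lam1 c x l10 c0 x0; have ty := @tail_pt lam2 c y l20 c0 y0.
rewrite -/c -/px in tx; rewrite -/c -/py in ty.
apply: le_trans (_ : (K0 + K1 * Lam) * exp_density lam1 x * exp_density lam2 y <= _).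
  by apply: ler_wpM2r => //; apply: ler_wpM2r.
rewrite -d1 in tx; rewrite -d2 in ty; rewrite -d1 -d2.
have -> : (K0 + K1 * Lam) * phi lam1 x * phi lam2 y =
  (K0 + 2 * Delta * K1) * phi lam1 x * phi lam2 y +
  K1 * (px * phi lam1 x) * phi lam2 y + K1 * phi lam1 x * (py * phi lam2 y).
  by rewrite /Lam; ring.
have p10 := @phi_ge0 lam1 x l10; have p20 := @phi_ge0 lam2 y l20.
rewrite -!addrA lerD2l; apply: lerD.
- have -> : K1 * (4 * lam1 * expR (- (2 * lam1)^-1 * c)) * psi lam1 c x * phi lam2 y =
    K1 * (4 * lam1 * expR (- (2 * lam1)^-1 * c) * psi lam1 c x) * phi lam2 y by ring.
  by apply: ler_wpM2r => //; apply: ler_wpM2l.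
- have -> : K1 * (4 * lam2 * expR (- (2 * lam2)^-1 * c)) * phi lam1 x * psi lam2 c y =
    (K1 * phi lam1 x) * (4 * lam2 * expR (- (2 * lam2)^-1 * c) * psi lam2 c y) by ring.
  by apply: ler_wpM2l => //; apply: mulr_ge0.
Qed.


Lemma final_ineq (lam1 lam2 P Delta c m' C0' a' K0' K1' E1' E2' : R) :
  0 < lam2 -> lam2 <= lam1 -> 0 < P -> 0 < Delta -> 0 <= c ->
  m' = Num.max (expR (- c / lam1)) Delta -> C0' = 2 + 8 * lam1 -> a' = C0' * P * m' ->
  K0' = (ln (1 + a') - a' / (1 + a')) / ln 2 ->
  K1' = P / ((1 + a') * ln 2) ->
  E1' = expR (- (2 * lam1)^-1 * c) ->
  E2' = expR (- (2 * lam2)^-1 * c) ->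
  (K0' + 2 * Delta * K1') * 1 * 1 + K1' * (4 * lam1 * E1') * E1' * 1 +
  K1' * (4 * lam2 * E2') * 1 * E2' <= log2 (1 + a').
Proof.
move=> l20 l21 P0 D0 c0 -> -> -> -> -> -> ->.
have l10 : 0 < lam1 := lt_le_trans l20 l21.
have l2 : 0 < ln (2 : R) by apply: ln_gt0; lra.
set m := Num.max (expR (- c / lam1)) Delta.
have Dm : Delta <= m by rewrite /m le_max lexx orbT.
have em : expR (- c / lam1) <= m by rewrite /m le_max lexx.
have m0 : 0 <= m by lra.
set a := (2 + 8 * lam1) * P * m.
have a0 : 0 <= a by rewrite /a; apply: mulr_ge0 => //; apply: mulr_ge0; lra.
set K0 := (ln (1 + _) - _) / ln 2.
set K1 := P / _.
set E1 := expR (- (2 * lam1)^-1 * c).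
set E2 := expR (- (2 * lam2)^-1 * c).
have K10 : 0 <= K1 by rewrite /K1; apply: divr_ge0; [exact: ltW|apply: mulr_ge0; lra].
have E11 : E1 * E1 = expR (- c / lam1) by rewrite /E1 -expRD; congr expR; field; lra.
have E22 : E2 * E2 = expR (- c / lam2) by rewrite /E2 -expRD; congr expR; field; lra.
have e21 : lam2 * expR (- c / lam2) <= lam1 * expR (- c / lam1).
  apply: ler_pM; [lra|exact: expR_ge0|exact: l21|].
  rewrite ler_expR !mulNr lerN2; apply: ler_wpM2l => //.
  by rewrite lef_pV2 ?posrE.
have -> : (K0 + 2 * Delta * K1) * 1 * 1 + K1 * (4 * lam1 * E1) * E1 * 1 +
  K1 * (4 * lam2 * E2) * 1 * E2 =
  K0 + K1 * (2 * Delta + 4 * (lam1 * (E1 * E1)) + 4 * (lam2 * (E2 * E2))) by ring.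
rewrite E11 E22.
apply: le_trans (_ : K0 + K1 * ((2 + 8 * lam1) * m) <= _).
  rewrite lerD2l; apply: ler_wpM2l => //.
  have : lam1 * expR (- c / lam1) <= lam1 * m by apply: ler_wpM2l => //; lra.
  lra.
rewrite /K0 /K1 /log2.
have -> : P / ((1 + a) * ln 2) * ((2 + 8 * lam1) * m) = a / (1 + a) / ln 2.
  transitivity (((2 + 8 * lam1) * P * m) / (1 + a) / ln 2); last by [].
  by field; apply/andP; split; lra.
by rewrite -mulrDl subrK.
Qed.

Lemma main_aux (lam1 lam2 : R) :
  0 < lam2 -> lam2 <= lam1 ->
  exists C0 : R, 0 < C0 /\
    forall (P Delta : R) (T : nat), 0 < P -> 0 < Delta ->
      (expected_rloss lam1 lam2 P Delta T <=
       (log2 (1 + C0 * P * Num.max (expR (- (T%:R * Delta) / lam1)) Delta))%:E)%E.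
Proof.
move=> l20 l21; have l10 : 0 < lam1 := lt_le_trans l20 l21.
exists (2 + 8 * lam1); split; first lra.
move=> P Delta T P0 D0.
set c := T%:R * Delta.
have c0 : 0 <= c by apply: mulr_ge0 => //; exact: ltW.
set m := Num.max (expR (- c / lam1)) Delta.
have m0 : 0 <= m by rewrite /m le_max (ltW D0) orbT.
set C0 := 2 + 8 * lam1.
set a := C0 * P * m.
have a0 : 0 <= a by rewrite /a; apply: mulr_ge0 => //; apply: mulr_ge0; rewrite /C0; lra.
have l2 : 0 < ln (2 : R) by apply: ln_gt0; lra.
set K0 := (ln (1 + a) - a / (1 + a)) / ln 2.
set K1 := P / ((1 + a) * ln 2).
set E1 := expR (- (2 * lam1)^-1 * c).
set E2 := expR (- (2 * lam2)^-1 * c).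
have K00 : 0 <= K0.
  rewrite /K0; apply: divr_ge0; last lra.
  have := @tangent_ln a 0 a0 (lexx 0); rewrite addr0 ln1; lra.
have K10 : 0 <= K1 by rewrite /K1; apply: divr_ge0; [exact: ltW|apply: mulr_ge0; lra].
set k1 := K0 + 2 * Delta * K1.
set k2 := K1 * (4 * lam1 * E1).
set k3 := K1 * (4 * lam2 * E2).
have k10 : 0 <= k1 by rewrite /k1; apply: addr_ge0 => //; apply: mulr_ge0 => //; lra.
have k20 : 0 <= k2 by rewrite /k2; apply: mulr_ge0 => //; apply: mulr_ge0; [lra|exact: expR_ge0].
have k30 : 0 <= k3 by rewrite /k3; apply: mulr_ge0 => //; apply: mulr_ge0; [lra|exact: expR_ge0].
have p1 := fun x => @phi_ge0 lam1 x l10.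
have p2 := fun x => @phi_ge0 lam2 x l20.
have s1 := fun x => @psi_ge0 lam1 c x l10.
have s2 := fun x => @psi_ge0 lam2 c x l20.
pose G (z : R * R) := k1 * phi lam1 z.1 * phi lam2 z.2 + k2 * psi lam1 c z.1 * phi lam2 z.2 +
  k3 * phi lam1 z.1 * psi lam2 c z.2.
have G0 z : 0 <= G z.
  rewrite /G; apply: addr_ge0; first apply: addr_ge0;
  by apply: mulr_ge0 => //; apply: mulr_ge0.
rewrite /expected_rloss integral_mkcond.
apply: le_trans (@le_integral_nm _ _ (mu \x mu)%E setT _ (fun z => (G z)%:E) _ _) _.
- by move=> z _; rewrite lee_fin.
- move=> z _; rewrite patchE; case: ifPn => [/set_mem [x0 y0]|_]; last by rewrite lee_fin.
  rewrite lee_fin /G.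
  exact: (@pointwise lam1 lam2 P Delta a T z.1 z.2 c K0 K1 l10 l20 P0 D0 a0 x0 y0 erefl erefl erefl).
have m1 := @meas_prod k1 _ _ (phi_meas lam1) (phi_meas lam2).
have m2 := @meas_prod k2 _ _ (psi_meas lam1 c) (phi_meas lam2).
have m3 := @meas_prod k3 _ _ (phi_meas lam1) (psi_meas lam2 c).
rewrite (_ : (fun z => (G z)%:E) = (fun z =>
  (k1 * phi lam1 z.1 * phi lam2 z.2 + k2 * psi lam1 c z.1 * phi lam2 z.2)%:E +
  (k3 * phi lam1 z.1 * psi lam2 c z.2)%:E)%E); last by apply/funext => z; rewrite /G EFinD.
rewrite ge0_integralD //; last 3 first.

- by move=> z _; rewrite lee_fin; apply: addr_ge0; apply: mulr_ge0 => //; apply: mulr_ge0.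
- apply/measurable_EFinP; apply: measurable_funD; exact/measurable_EFinP.
- by move=> z _; rewrite lee_fin; apply: mulr_ge0 => //; apply: mulr_ge0.
under eq_integral do rewrite EFinD.
rewrite ge0_integralD //; last 2 first.
- by move=> z _; rewrite lee_fin; apply: mulr_ge0 => //; apply: mulr_ge0.
- by move=> z _; rewrite lee_fin; apply: mulr_ge0 => //; apply: mulr_ge0.
rewrite (@prod_int_k _ _ _ _ _ (phi_meas lam1) (phi_meas lam2) p1 p2 k10 (@phi_int lam1 l10) (@phi_int lam2 l20)).
rewrite (@prod_int_k _ _ _ _ _ (psi_meas lam1 c) (phi_meas lam2) s1 p2 k20 (@psi_int lam1 c l10 c0) (@phi_int lam2 l20)).
rewrite (@prod_int_k _ _ _ _ _ (phi_meas lam1) (psi_meas lam2 c) p1 s2 k30 (@phi_int lam1 l10) (@psi_int lam2 c l20 c0)).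
rewrite -!EFinD lee_fin.
exact: (@final_ineq lam1 lam2 P Delta c m C0 a K0 K1 E1 E2 l20 l21 P0 D0 c0 erefl erefl erefl erefl erefl erefl erefl).
Qed.

End Alg.

Theorem lemma2 (R : realType) (lam1 lam2 : R) :
  0 < lam2 -> lam2 <= lam1 ->
  exists C0 : R, 0 < C0 /\
    forall (P Delta : R) (T : nat), 0 < P -> 0 < Delta ->
      (expected_rloss lam1 lam2 P Delta T <=
       (log2 (1 + C0 * P * Num.max (expR (- (T%:R * Delta) / lam1)) Delta))%:E)%E.
Proof. exact: main_aux. Qed.
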